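(* If $G$ is a connected graph on at least two vertices and $H$ is any graph, then $\chi_{\mu_2}(G\circ H)\le \theta(G^{[\natural 2]})\le \theta\big((G\circ H)^{[\natural 2]}\big)$. Moreover, both inequalities are sharp (each is attained with equality for suitable such $G$ and $H$).
   Context: The lexicographic product $G\circ H$ has vertex set $V(G)\times V(H)$, with $(g,h)$ adjacent to $(g',h')$ iff $gg'\in E(G)$, or $g=g'$ and $hh'\in E(H)$. The exact distance-$2$ graph $X^{[\natural 2]}$ has vertex set $V(X)$, two vertices being adjacent iff their distance in $X$ equals $2$. $\theta(X)$ is the clique cover number (minimum number of cliques partitioning $V(X)$). A set $M\subseteq V(X)$ is a $2$-distance mutual-visibility set if for every two vertices $u,v\in M$ there exists a shortest $u,v$-path of length at most $2$ none of whose internal vertices lies in $M$. $\chi_{\mu_2}(X)$ is the minimum cardinality of a partition of $V(X)$ into $2$-distance mutual-visibility sets. *)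

(* Defs.v *)
From HB Require Import structures.
From mathcomp Require Import all_boot.
From mathcomp Require Import boolp.

Set Implicit Arguments.
Unset Strict Implicit.
Unset Printing Implicit Defensive.

Definition sgraph (T : finType) (e : rel T) : Prop :=
  symmetric e /\ irreflexive e.

Section Graphs.
Variable T : finType.
Implicit Types (e : rel T) (u v : T).

Fixpoint walkb e u v (n : nat) : bool :=
  match n with
  | 0 => u == v
  | n'.+1 => [exists w, e u w && walkb e w v n']
  end.

Definition dist_eq e u v (k : nat) : bool :=
  walkb e u v k && [forall j : 'I_k, ~~ walkb e u v j].

Definition connected e : Prop := forall u v, exists k, walkb e u v k.

Definition exact_dist2 e : rel T := fun u v => dist_eq e u v 2.

(* a u,v-path whose internal vertices (in order) are p *)
Definition is_path e u v (p : seq T) : bool :=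
  path e u (rcons p v) && uniq (u :: rcons p v).

Definition is_clique e (A : {set T}) : Prop :=
  forall x y, x \in A -> y \in A -> x != y -> e x y.

(* 2-distance mutual-visibility set: for any two (distinct) vertices of M there
   is a shortest u,v-path of length at most 2 (length = size p + 1) with no
   internal vertex in M. *)
Definition mv2 e (M : {set T}) : Prop :=
  forall u v, u \in M -> v \in M -> u != v ->
    exists p : seq T,
      [/\ is_path e u v p, dist_eq e u v (size p).+1, (size p).+1 <= 2
        & all (fun w => w \notin M) p].

(* V(T) can be partitioned into (at most) k classes each satisfying P
   (empty classes allowed; this does not change the minimum). *)
Definition partition_into (P : {set T} -> Prop) (k : nat) : Prop :=
  exists f : T -> 'I_k, forall i : 'I_k, P [set x | f x == i].

(* minimum number of parts in such a partition (0 if none exists, which never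
   happens for the properties used below). *)
Definition min_parts (P : {set T} -> Prop) : nat :=
  match pselect (exists k, `[< partition_into P k >]) with
  | left h => ex_minn h
  | right _ => 0
  end.

Definition theta e : nat := min_parts (is_clique e).

Definition chi_mu2 e : nat := min_parts (mv2 e).

End Graphs.

Definition lexprod (T1 T2 : finType) (eG : rel T1) (eH : rel T2) : rel (T1 * T2) :=
  fun x y => eG x.1 y.1 || ((x.1 == y.1) && eH x.2 y.2).

Definition thm_hyp (T1 T2 : finType) (eG : rel T1) (eH : rel T2) : Prop :=
  [/\ sgraph eG, sgraph eH, connected eG, 1 < #|T1| & 0 < #|T2|].

(* Main.v *)
Require Import Defs.
From mathcomp Require Import all_boot.
From mathcomp Require Import boolp.
Set Implicit Arguments.
Unset Strict Implicit.

Section Aux.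
Variable T : finType.
Implicit Types (e : rel T) (u v : T).

Lemma walkb1 e u v : walkb e u v 1 = e u v.
Proof.
rewrite /=; apply/existsP/idP => [[w /andP[h /eqP <-]] // | h].
by exists v; rewrite h eqxx.
Qed.

Lemma dist_eq1 e u v : dist_eq e u v 1 = e u v && (u != v).
Proof.
rewrite /dist_eq walkb1; congr (_ && _).
apply/forallP/idP => [H | H [j hj]].
  by have := H (Ordinal (isT : 0 < 1)).
by case: j hj.
Qed.

Lemma dist_eq2 e u v :
  dist_eq e u v 2 = [exists w, e u w && e w v] && (u != v) && ~~ e u v.
Proof.
rewrite /dist_eq.
have -> : walkb e u v 2 = [exists w, e u w && e w v].
  by rewrite /=; apply: eq_existsb => w; have := walkb1 e w v => /= ->.
rewrite -andbA; congr (_ && _).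
apply/forallP/andP => [H | [H1 H2] [j hj]].
  split; first by have := H (Ordinal (isT : 0 < 2)).
  by have := H (Ordinal (isT : 1 < 2)); rewrite walkb1.
change (~~ walkb e u v j); move: hj; case: j => [|[|j]] // _; by rewrite ?walkb1.
Qed.

Lemma min_parts_le (P : {set T} -> Prop) k :
  partition_into P k -> min_parts P <= k.
Proof.
move=> pk; rewrite /min_parts; case: pselect => [h|n].
  by case: ex_minnP => m _ hmin; apply: hmin; apply/asboolP.
by exfalso; apply: n; exists k; apply/asboolP.
Qed.

Lemma min_parts_spec (P : {set T} -> Prop) k :
  partition_into P k -> partition_into P (min_parts P).
Proof.
move=> pk; rewrite /min_parts; case: pselect => [h|n].
  by case: ex_minnP => m /asboolP.
by exfalso; apply: n; exists k; apply/asboolP.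
Qed.

Lemma min_parts_ge (P : {set T} -> Prop) n :
  (forall k, k < n -> ~ partition_into P k) ->
  (exists k, partition_into P k) -> n <= min_parts P.
Proof.
move=> H [k pk]; have := min_parts_spec pk.
by case: (ltnP (min_parts P) n) => // /H.
Qed.

Lemma clique_singletons e : partition_into (is_clique e) #|T|.
Proof.
exists enum_rank => i x y; rewrite !inE => /eqP hx /eqP hy.
by rewrite -hy in hx; move/enum_rank_inj: hx => ->; rewrite eqxx.
Qed.

End Aux.

Section Main.
Variables (T1 T2 : finType) (eG : rel T1) (eH : rel T2).
Hypothesis hyp : thm_hyp eG eH.

Lemma has_nbr g : exists w, eG g w.
Proof.
case: hyp => _ _ hc h1 _.
have [g' ng] : exists g', g != g'.
  case/card_gt1P: h1 => x [y [_ _ nxy]].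
  case: (eqVneq g x) => [->|]; [by exists y | by exists x].
case: (hc g g') => k; elim: k g ng => [|k IH] g ng /=; first by rewrite (negbTE ng).
by case/existsP => w /andP[h _]; exists w.
Qed.


Lemma part_mv2 k (f : T1 -> 'I_k)
  (hf : forall i, is_clique (exact_dist2 eG) [set x | f x == i]) i :
  mv2 (lexprod eG eH) [set x : T1 * T2 | f x.1 == i].
Proof.
case: hyp => [[sG iG] [sH iH] _ _ _].
have nE a b : eG a b -> a != b.
  by move=> ab; apply/eqP => E; rewrite E iG in ab.
have notin g w : eG g w -> f g = i -> f w != i.
  move=> egw fg; apply/negP => /eqP fw.
  have := hf i g w; rewrite !inE fg fw eqxx => /(_ isT isT (nE _ _ egw)).
  by rewrite /exact_dist2 dist_eq2 egw andbF.
move=> [g h] [g' h']; rewrite !inE /= => /eqP fg /eqP fg' neq.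
have two w : eG g w -> eG w g' -> ~~ lexprod eG eH (g,h) (g',h') ->
  exists p : seq (T1 * T2),
      [/\ is_path (lexprod eG eH) (g, h) (g', h') p,
        dist_eq (lexprod eG eH) (g, h) (g', h') (size p).+1, (size p).+1 <= 2
        & all (fun w => w \notin [set x : T1 * T2 | f x.1 == i]) p].
  move=> gw wg' nadj; exists [:: (w, h)]; split => //.
  - rewrite /is_path /= /lexprod /= gw wg' /= !inE !negb_or neq andbT.
    rewrite !xpair_eqE !negb_and (nE _ _ gw) (nE _ _ wg') /=.
    done.
  - rewrite dist_eq2 neq nadj !andbT; apply/existsP; exists (w, h).
    by rewrite /lexprod /= gw wg'.
  - by rewrite /= inE /= (notin _ _ gw fg).
case: (eqVneq g g') => [E|ngg'].
  subst g'; case: (has_nbr g) => w gw.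
  case ehh: (eH h h').
    exists [::]; split => //.
    - by rewrite /is_path /= /lexprod /= eqxx ehh orbT /= inE neq.
    - by rewrite dist_eq1 /lexprod /= eqxx ehh orbT.
  apply: (two w gw) => //; first by rewrite sG.
  by rewrite /lexprod /= iG eqxx ehh.
have := hf i g g'; rewrite !inE fg fg' eqxx => /(_ isT isT ngg').
rewrite /exact_dist2 dist_eq2 => /andP[/andP[/existsP[w /andP[gw wg']] _] ngadj].
apply: (two w gw wg').
by rewrite /lexprod /= (negbTE ngadj) (negbTE ngg').
Qed.


Lemma part_theta k (f : T1 * T2 -> 'I_k)
  (hf : forall i, is_clique (exact_dist2 (lexprod eG eH)) [set x | f x == i])
  (h0 : T2) i : is_clique (exact_dist2 eG) [set g | f (g, h0) == i].
Proof.
move=> g g'; rewrite !inE => fg fg' ngg'.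
have := hf i (g, h0) (g', h0); rewrite !inE fg fg'.
move=> /(_ isT isT); rewrite xpair_eqE negb_and ngg' => /(_ isT).
rewrite /exact_dist2 !dist_eq2 ngg' => /andP[/andP[/existsP[[a b] /andP[e1 e2]] _] nadj].
move: nadj; rewrite /lexprod /= (negbTE ngg') /= orbF => /negbTE ngadj.
rewrite ngadj andbT /=.
move: e1 e2; rewrite /lexprod /=.
case: (eqVneq g a) => [<-|nga] /=.
  by rewrite (negbTE ngg') ngadj.
rewrite orbF => ga; case: (eqVneq a g') => [E|_] /=; first by move: ngadj; rewrite -E ga.
by rewrite orbF andbT => ag'; apply/existsP; exists a; rewrite ga ag'.
Qed.

Lemma ineq1 : chi_mu2 (lexprod eG eH) <= theta (exact_dist2 eG).
Proof.
have [f hf] := min_parts_spec (clique_singletons (exact_dist2 eG)).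
apply: min_parts_le; exists (fun x => f x.1) => i.
exact: part_mv2.
Qed.

Lemma ineq2 : theta (exact_dist2 eG) <= theta (exact_dist2 (lexprod eG eH)).
Proof.
have [f hf] := min_parts_spec (clique_singletons (exact_dist2 (lexprod eG eH))).
case: hyp => _ _ _ _; case/card_gt0P => h0 _.
apply: min_parts_le; exists (fun g => f (g, h0)) => i.
exact: part_theta.
Qed.

End Main.

Lemma mv2_singletons (T : finType) (e : rel T) : partition_into (mv2 e) #|T|.
Proof.
exists enum_rank => i x y; rewrite !inE => /eqP hx /eqP hy.
by rewrite -hy in hx; move/enum_rank_inj: hx => ->; rewrite eqxx.
Qed.

Definition eK2 : rel bool := fun x y => x != y.
Definition eE2 : rel bool := fun _ _ => false.

Lemma ex_hyp : thm_hyp eK2 eE2.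
Proof.
split.
- by split => [x y|x]; rewrite /eK2 ?eqxx // eq_sym.
- by split.
- move=> u v; case: (eqVneq u v) => [->|n]; first by exists 0 => /=.
  by exists 1; rewrite walkb1.
- by rewrite card_bool.
- by rewrite card_bool.
Qed.

Lemma ex_lower : 2 <= chi_mu2 (lexprod eK2 eE2).
Proof.
apply: min_parts_ge; last by exists #|{: bool * bool}|; apply: mv2_singletons.
move=> [|[|k]] // _ [f hf].
  by case: (f (true, true)).
have := hf ord0 (false, false) (false, true); rewrite !inE !(ord1 (f _)) eqxx.
case/(_ isT isT isT) => p [hp hd hs ha].
case: p hp hd hs ha => [|w [|w' p]] //.
by move=> _ _ /=; rewrite inE (ord1 (f _)) eqxx.
Qed.

Lemma ex_upper : theta (exact_dist2 (lexprod eK2 eE2)) <= 2.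
Proof.
apply: min_parts_le.
exists (fun x => if x.1 then ord_max else ord0) => i [a b] [c d].
rewrite !inE /= => /eqP <- /eqP E.
have ac : a = c.
  by move: E; case: a; case: c => // /(congr1 val).
subst c => nbd.
have {}nbd : b != d by rewrite xpair_eqE eqxx in nbd.
rewrite /exact_dist2 dist_eq2 /lexprod /eK2 /eE2 /= eqxx /=.
rewrite xpair_eqE eqxx nbd /= andbT.
rewrite andbT; apply/existsP; exists (~~ a, b) => /=; by clear E; case: a.
Qed.

Theorem theorem4p1 :
  (forall (T1 T2 : finType) (eG : rel T1) (eH : rel T2),
      thm_hyp eG eH ->
      chi_mu2 (lexprod eG eH) <= theta (exact_dist2 eG) /\
      theta (exact_dist2 eG) <= theta (exact_dist2 (lexprod eG eH)))
  /\ (exists (T1 T2 : finType) (eG : rel T1) (eH : rel T2),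
        thm_hyp eG eH /\
        chi_mu2 (lexprod eG eH) = theta (exact_dist2 eG))
  /\ (exists (T1 T2 : finType) (eG : rel T1) (eH : rel T2),
        thm_hyp eG eH /\
        theta (exact_dist2 eG) = theta (exact_dist2 (lexprod eG eH))).
Proof.
have h1 := ineq1 ex_hyp; have h2 := ineq2 ex_hyp.
have l := ex_lower; have u := ex_upper.
split; first by move=> T1 T2 eG eH hyp; split; [exact: ineq1 | exact: ineq2].
split; exists bool, bool, eK2, eE2; split; try exact: ex_hyp;
  apply/eqP; rewrite eqn_leq.
- by rewrite h1 /= (leq_trans (leq_trans h2 u) l).
- by rewrite h2 /= (leq_trans (leq_trans u l) h1).
Qed.
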